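(* Let $M$ be an orientable connected combinatorial $3$-manifold with vertex set $V$, let $V=V_1\,\dot\cup\, V_2$ be a partition of $V$, and let $n\in\mathbb{N}$ with $|V|\in\{2n,2n+1\}$. Suppose the slicing $S_{(V_1,V_2)}$ is connected. Then \[ g(S_{(V_1,V_2)})\le \binom{n-1}{2}, \] where $g$ denotes the genus.
   Context: A combinatorial $3$-manifold is a finite pure $3$-dimensional simplicial complex in which the link of every vertex is a combinatorial $2$-sphere. A function $f:M\to\mathbb{R}$ is regular simplexwise linear (rsl) if it is linear on every simplex of $M$ and takes pairwise distinct values on the vertices. Given a partition $V=V_1\dot\cup V_2$ of the vertex set into two nonempty sets, choose an rsl-function $f$ with $f(v)<f(w)$ for all $v\in V_1$, $w\in V_2$, and a number $x_0$ with $f(v)<x_0<f(w)$ for all such $v,w$; the slicing $S_{(V_1,V_2)}$ is the level set $f^{-1}(x_0)$, a polyhedral surface (made of triangles and quadrilaterals, one per tetrahedron meeting both $V_1$ and $V_2$) which separates $M$ into the part containing $V_1$ and the part containing $V_2$; its combinatorial type depends only on the partition. *)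

(* Defs.v *)
(* Simplicial complexes on a finite vertex type V are given
   by their sets of facets (sets of vertices). *)
From mathcomp Require Import all_boot all_order all_algebra.
Set Implicit Arguments.
Unset Strict Implicit.
Unset Printing Implicit Defensive.
Import Order.TTheory GRing.Theory Num.Theory.

Section Complexes.
Variable V : finType.
Implicit Types (K M : {set {set V}}).

(* the faces with exactly k vertices (i.e. of dimension k-1) of the complex
   with facet set K *)
Definition kfaces K (k : nat) : {set {set V}} :=
  [set s : {set V} | (#|s| == k) && [exists F in K, s \subset F]].

Definition vertices K : {set V} := [set v | [exists F in K, v \in F]].

Definition skel K : rel V := fun u w => [exists F in K, (u \in F) && (w \in F)].

Definition complex_connected K : Prop :=
  forall u w, u \in vertices K -> w \in vertices K -> connect (skel K) u w.

Definition vlink K (v : V) : {set {set V}} := [set F :\ v | F in K & v \in F].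

Definition euler2 K : int :=
  ((Posz #|kfaces K 1|) - (Posz #|kfaces K 2|) + (Posz #|kfaces K 3|))%R.

(* combinatorial 2-sphere: a pure 2-dimensional complex which is a closed
   combinatorial surface (every edge in exactly two triangles, every vertex
   link a single cycle), connected, with Euler characteristic 2 *)
Definition comb_2sphere K : Prop :=
  [/\ forall F, F \in K -> #|F| = 3,
      forall e, e \in kfaces K 2 -> #|[set F in K | e \subset F]| = 2,
      forall v, v \in vertices K -> complex_connected (vlink K v),
      complex_connected K &
      euler2 K = (Posz 2)].

Definition comb_3manifold M : Prop :=
  [/\ M != set0,
      forall F, F \in M -> #|F| = 4 &
      forall v, v \in vertices M -> comb_2sphere (vlink M v)].

Definition pos (F : {set V}) (v : V) : nat :=
  #|[set x in F | (enum_rank x < enum_rank v)%N]|.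

(* orientability: each tetrahedron gets an orientation sign s F relative to
   the sorted order of its vertices; the face opposite to vertex a of F
   inherits the sign s F * (-1)^(pos F a); adjacent tetrahedra must induce
   opposite orientations on their common triangle. *)
Definition orientable M : Prop :=
  exists s : {set V} -> bool,
    forall F1 F2 a b, F1 \in M -> F2 \in M ->
      a \in F1 -> a \notin F2 -> b \in F2 -> b \notin F1 ->
      F1 :\ a = F2 :\ b ->
      (s F1 (+) odd (pos F1 a)) != (s F2 (+) odd (pos F2 b)).

Definition mixed (V1 : {set V}) (s : {set V}) : bool := (s :&: V1 != set0) && (s :\: V1 != set0).

(* cells of the slicing S_(V1, V \ V1):
   vertices  = edges of M meeting both sides,
   edges     = triangles of M meeting both sides,
   faces     = tetrahedra of M meeting both sides (triangles / quadrilaterals) *)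
Definition sl_vertices M (V1 : {set V}) := [set e in kfaces M 2 | mixed V1 e].
Definition sl_edges M (V1 : {set V}) := [set t in kfaces M 3 | mixed V1 t].
Definition sl_faces M (V1 : {set V}) := [set F in M | mixed V1 F].

Definition slicing_euler M (V1 : {set V}) : int :=
  ((Posz #|sl_vertices M V1|) - (Posz #|sl_edges M V1|) + (Posz #|sl_faces M V1|))%R.

Definition sl_adj M (V1 : {set V}) : rel {set V} := fun e f =>
  [&& e \in sl_vertices M V1, f \in sl_vertices M V1 &
      [exists t in sl_edges M V1, (e \subset t) && (f \subset t)]].

Definition slicing_connected M (V1 : {set V}) : Prop :=
  forall e f, e \in sl_vertices M V1 -> f \in sl_vertices M V1 ->
    connect (sl_adj M V1) e f.

Definition slicing_genus M (V1 : {set V}) : rat :=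
  ((2%:Q - (slicing_euler M V1)%:~R) / 2%:Q)%R.

End Complexes.

(* Main.v *)
Require Import Defs.
From mathcomp Require Import all_boot all_order all_algebra.
From mathcomp Require Import zify ring lra.
Set Implicit Arguments.
Unset Strict Implicit.
Unset Printing Implicit Defensive.
Import Order.TTheory GRing.Theory Num.Theory.

Lemma cardE_sum (T : finType) (A : {set T}) (P : pred T) :
  #|[set x in A | P x]| = \sum_(x in A) (P x : nat).
Proof.
rewrite -sum1_card (eq_bigl (fun x => (x \in A) && P x)); last by move=> x; rewrite inE.
by rewrite big_mkcondr; apply: eq_bigr => x _; case: (P x).
Qed.

Lemma sum_split (T : finType) (A : {set T}) (w : T -> nat) (g : nat -> nat) N :
  (forall s, s \in A -> w s < N) ->
  \sum_(s in A) g (w s) = \sum_(i < N) g i * #|[set s in A | w s == i]|.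
Proof.
move=> HN.
rewrite [RHS](eq_bigr (fun i : 'I_N => \sum_(s in A) g i * (w s == i))); last first.
  by move=> i _; rewrite (cardE_sum A (fun s => w s == i)) big_distrr.
rewrite exchange_big /=; apply: eq_bigr => s As.
rewrite (bigD1 (Ordinal (HN s As))) //= eqxx muln1 big1 ?addn0 //.
move=> i /negbTE; rewrite -val_eqE /= eq_sym => ->; by rewrite muln0.
Qed.
Lemma kf_card (V : finType) (M : {set {set V}}) j s : s \in kfaces M j -> #|s| = j.
Proof. by rewrite inE => /andP[/eqP]. Qed.

Lemma kf4 (V : finType) (M : {set {set V}}) :
  (forall F, F \in M -> #|F| = 4) -> kfaces M 4 = M.
Proof.
move=> H4; apply/setP => T; rewrite inE; apply/idP/idP.
  case/andP => /eqP cT /existsP[F /andP[FM TF]].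
  suff -> : T = F by [].
  by apply/eqP; rewrite eqEcard TF cT H4.
by move=> TM; rewrite H4 // eqxx /=; apply/existsP; exists T; rewrite TM subxx.
Qed.

Lemma mem_vlink (V : finType) (M : {set {set V}}) v G :
  G \in vlink M v -> exists2 F, F \in M & (v \in F) /\ G = F :\ v.
Proof.
by case/imsetP => F; rewrite inE => /andP[FM vF] ->; exists F.
Qed.

Lemma vlinkP (V : finType) (M : {set {set V}}) v F :
  F \in M -> v \in F -> F :\ v \in vlink M v.
Proof. by move=> FM vF; apply/imsetP; exists F => //; rewrite inE FM. Qed.

Lemma kfaces_vlink (V : finType) (M : {set {set V}}) v j :
  kfaces (vlink M v) j = (fun s => s :\ v) @: [set s in kfaces M j.+1 | v \in s].
Proof.
apply/setP => s; apply/idP/idP.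
  rewrite inE => /andP[/eqP cs /existsP[G /andP[GL sG]]].
  case: (mem_vlink GL) => F FM [vF eG]; subst G.
  have vs : v \notin s by apply/negP => /(subsetP sG); rewrite !inE eqxx.
  apply/imsetP; exists (v |: s); last by rewrite setU1K.
  rewrite inE setU11 andbT inE cardsU1 vs cs eqxx /=.
  apply/existsP; exists F; rewrite FM /=.
  by rewrite subUset sub1set vF (subset_trans sG) // subD1set.
case/imsetP => t; rewrite !inE => /andP[/andP[/eqP ct /existsP[F /andP[FM tF]]] vt] ->.
have -> : #|t :\ v| = j by move: ct; rewrite (cardsD1 v t) vt add1n => -[].
rewrite eqxx /=.
apply/existsP; exists (F :\ v); rewrite vlinkP //; last by apply: (subsetP tF).
by rewrite setSD.
Qed.

Lemma card_kfaces_vlink (V : finType) (M : {set {set V}}) v j :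
  #|kfaces (vlink M v) j| = #|[set s in kfaces M j.+1 | v \in s]|.
Proof.
rewrite kfaces_vlink card_in_imset // => s t; rewrite !inE => /andP[_ vs] /andP[_ vt] e.
by rewrite -(setD1K vs) -(setD1K vt) e.
Qed.

Lemma tri2 (V : finType) (M : {set {set V}}) :
  comb_3manifold M -> forall t, t \in kfaces M 3 -> #|[set F in M | t \subset F]| = 2.
Proof.
case=> _ H4 HL t tK.
have tK' := tK; rewrite inE in tK'; case/andP: tK' => /eqP ct /existsP[F0 /andP[F0M tF0]].
have [v vt] : exists v, v \in t.
  by apply/set0Pn; rewrite -card_gt0 ct.
have vV : v \in vertices M.
  by rewrite inE; apply/existsP; exists F0; rewrite F0M (subsetP tF0).
case: (HL v vV) => _ Hedge _ _ _.
have eK : t :\ v \in kfaces (vlink M v) 2.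
  by rewrite kfaces_vlink; apply: imset_f; rewrite inE tK vt.
rewrite -(Hedge _ eK).
have -> : [set G in vlink M v | t :\ v \subset G] = (fun F => F :\ v) @: [set F in M | t \subset F].
  apply/setP => G; apply/idP/idP.
    rewrite inE => /andP[GL sub]; case: (mem_vlink GL) => F FM [vF eG]; subst G.
    apply: imset_f; rewrite inE FM /=.
    by rewrite -(setD1K vt) subUset sub1set vF (subset_trans sub) // subD1set.
  case/imsetP => F /[!inE] /andP[FM tF] ->.
  by rewrite vlinkP ?(subsetP tF) // setSD.
symmetry; apply: card_in_imset => F1 F2; rewrite !inE => /andP[_ s1] /andP[_ s2] e.
by rewrite -(setD1K (subsetP s1 v vt)) -(setD1K (subsetP s2 v vt)) e.
Qed.

Lemma link_eq (V : finType) (M : {set {set V}}) v :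
  comb_3manifold M -> v \in vertices M ->
  #|[set s in kfaces M 2 | v \in s]| + #|[set s in kfaces M 4 | v \in s]| =
  2 + #|[set s in kfaces M 3 | v \in s]|.
Proof.
case=> _ _ HL vV; case: (HL v vV) => _ _ _ _.
rewrite /euler2 !card_kfaces_vlink => E.
lia.
Qed.

Lemma setI_pred (V : finType) (F V1 : {set V}) : [set x in F | x \in V1] = F :&: V1.
Proof. by apply/setP => x; rewrite !inE. Qed.

Lemma sumV (V : finType) (A : {set {set V}}) (V1 : {set V}) :
  \sum_(v in V1) #|[set s in A | v \in s]| = \sum_(s in A) #|s :&: V1|.
Proof.
rewrite (eq_bigr (fun v => \sum_(s in A) (v \in s : nat))); last first.
  by move=> v _; rewrite (cardE_sum A (fun s => v \in s)).
rewrite exchange_big /=; apply: eq_bigr => s _.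
by rewrite setIC -setI_pred cardE_sum.
Qed.

Definition W (V : finType) (M : {set {set V}}) (V1 : {set V}) j i :=
  #|[set s in kfaces M j | #|s :&: V1| == i]|.

Lemma wD1 (V : finType) (F V1 : {set V}) x : x \in F ->
  #|(F :\ x) :&: V1| = #|F :&: V1| - (x \in V1).
Proof.
move=> xF; rewrite (cardsD1 x (F :&: V1)) !inE xF /=.
have -> : (F :\ x) :&: V1 = (F :&: V1) :\ x.
  by apply/setP => y; rewrite !inE; case: (y == x); rewrite ?andbF.
by case: (x \in V1) => /=; rewrite ?addKn ?add0n ?subn0.
Qed.

Lemma per_tet (V : finType) (F V1 : {set V}) i : #|F| = 4 ->
  #|[set x in F | #|(F :\ x) :&: V1| == i]| =
  #|F :&: V1| * (#|F :&: V1|.-1 == i) + (4 - #|F :&: V1|) * (#|F :&: V1| == i).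
Proof.
move=> c4; rewrite cardE_sum.
rewrite (eq_bigr (fun x => (x \in V1) * (#|F :&: V1|.-1 == i) + (x \notin V1) * (#|F :&: V1| == i))); last first.
  by move=> x xF; rewrite wD1 //; case: (x \in V1) => /=; rewrite ?subn1 ?subn0 ?mul1n ?mul0n ?addn0.
rewrite big_split /= -!big_distrl /= -!cardE_sum setI_pred.
have -> : [set x in F | x \notin V1] = F :\: V1 by apply/setP => x; rewrite !inE andbC.
by rewrite cardsD c4.
Qed.

Lemma incidence (V : finType) (M : {set {set V}}) (V1 : {set V}) i :
  comb_3manifold M ->
  2 * W M V1 3 i = \sum_(u < 5) ((u : nat) * ((u : nat).-1 == i) + (4 - u) * ((u : nat) == i)) * W M V1 4 u.
Proof.
move=> HM; have H4 : forall F, F \in M -> #|F| = 4 by case: HM.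
rewrite /W kf4 // -(@sum_split _ M (fun F => #|F :&: V1|) (fun u => u * (u.-1 == i) + (4 - u) * (u == i))); last first.
  by move=> F FM; rewrite ltnS -(H4 F FM); apply: subset_leq_card; rewrite subsetIl.
set T3 := [set s in kfaces M 3 | #|s :&: V1| == i].
rewrite mulnC -sum_nat_const.
transitivity (\sum_(t in T3) \sum_(F in M) (t \subset F : nat)).
  apply: eq_bigr => t; rewrite inE => /andP[tK _].
  by rewrite -(tri2 HM tK) (cardE_sum M (fun F => t \subset F)).
rewrite exchange_big /=; apply: eq_bigr => F FM.
rewrite -(cardE_sum T3 (fun t => t \subset F)) -(@per_tet _ F V1 i (H4 F FM)).
have -> : [set t in T3 | t \subset F] = (fun x => F :\ x) @: [set x in F | #|(F :\ x) :&: V1| == i].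
  apply/setP => t; apply/idP/idP.
    move=> /setIdP[/setIdP[tK wi] tF].
    have ct := kf_card tK.
    have [x xFt] : exists x, x \in F :\: t.
      by apply/set0Pn; rewrite -card_gt0 cardsD (setIidPr tF) ct H4.
    move: xFt; rewrite inE => /andP[xt xF].
    have et : t = F :\ x.
      have c3 : #|F :\ x| = 3 by move: (H4 F FM); rewrite (cardsD1 x F) xF add1n => -[].
      apply/eqP; rewrite eqEcard c3 ct leqnn andbT.
      by apply/subsetP => y yt; rewrite !inE (subsetP tF) // andbT; apply: contraNneq xt => <-.
    by apply/imsetP; exists x => //; rewrite inE xF -et.
  case/imsetP => x /[!inE] /andP[xF wi] ->.
  rewrite wi subD1set andbT /=.
  have c3 : #|F :\ x| = 3 by move: (H4 F FM); rewrite (cardsD1 x F) xF add1n => -[].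
  by rewrite c3 eqxx andbT /=; apply/existsP; exists F; rewrite FM subD1set.
apply: card_in_imset => x y; rewrite !inE => /andP[xF _] /andP[yF _] e.
apply/eqP; apply: contraT => nxy.
have : y \in F :\ x by rewrite !inE yF eq_sym nxy.
by rewrite e !inE eqxx.
Qed.

Lemma mixed_card (V : finType) (V1 s : {set V}) j : #|s| = j ->
  mixed V1 s = (0 < #|s :&: V1| < j).
Proof.
by move=> cs; rewrite /mixed -!card_gt0 cardsD cs subn_gt0.
Qed.

Lemma sl_count (V : finType) (M : {set {set V}}) (V1 : {set V}) j (g : nat -> nat) :
  \sum_(s in kfaces M j) g #|s :&: V1| = \sum_(i < j.+1) g i * W M V1 j i.
Proof.
apply: sum_split => s sK; rewrite ltnS -(kf_card sK).
by apply: subset_leq_card; rewrite subsetIl.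
Qed.

Lemma chi_bound (V : finType) (M : {set {set V}}) (V1 : {set V}) :
  comb_3manifold M -> vertices M = [set: V] ->
  (2 * (Posz #|V1|) - 2 * (Posz 'C(#|V1|, 2)) <= slicing_euler M V1)%R.
Proof.
move=> HM HV; have H4 : forall F, F \in M -> #|F| = 4 by case: HM.
have hV : #|sl_vertices M V1| = W M V1 2 1.
  rewrite /sl_vertices (cardE_sum _ (mixed V1)).
  rewrite (eq_bigr (fun s => (0 < #|s :&: V1| < 2 : nat))); last first.
    by move=> s sK; rewrite (mixed_card V1 (kf_card sK)).
  rewrite (sl_count M V1 2 (fun u => (0 < u < 2 : nat))).
  rewrite !big_ord_recl !big_ord0 /= /bump /= ?addn0 ?add1n; lia.
have hE : #|sl_edges M V1| = W M V1 3 1 + W M V1 3 2.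
  rewrite /sl_edges (cardE_sum _ (mixed V1)).
  rewrite (eq_bigr (fun s => (0 < #|s :&: V1| < 3 : nat))); last first.
    by move=> s sK; rewrite (mixed_card V1 (kf_card sK)).
  rewrite (sl_count M V1 3 (fun u => (0 < u < 3 : nat))).
  rewrite !big_ord_recl !big_ord0 /= /bump /= ?addn0 ?add1n; lia.
have hF : #|sl_faces M V1| = W M V1 4 1 + W M V1 4 2 + W M V1 4 3.
  rewrite /sl_faces -{1}(kf4 H4) (cardE_sum _ (mixed V1)).
  rewrite (eq_bigr (fun s => (0 < #|s :&: V1| < 4 : nat))); last first.
    by move=> s sK; rewrite (mixed_card V1 (kf_card sK)).
  rewrite (sl_count M V1 4 (fun u => (0 < u < 4 : nat))).
  rewrite !big_ord_recl !big_ord0 /= /bump /= ?addn0 ?add1n; lia.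
have hI3 := incidence V1 3 HM.
have hI2 := incidence V1 2 HM.
rewrite !big_ord_recl !big_ord0 /= /bump /= ?addn0 ?add1n in hI3 hI2.
have hL : \sum_(v in V1) (#|[set s in kfaces M 2 | v \in s]| + #|[set s in kfaces M 4 | v \in s]|) =
          \sum_(v in V1) (2 + #|[set s in kfaces M 3 | v \in s]|).
  by apply: eq_bigr => v _; rewrite link_eq // HV inE.
rewrite !big_split /= !sumV sum_nat_const in hL.
rewrite (sl_count M V1 2 id) (sl_count M V1 3 id) (sl_count M V1 4 id) in hL.
rewrite !big_ord_recl !big_ord0 /= /bump /= ?addn0 ?add1n in hL.
have hC : W M V1 2 2 <= 'C(#|V1|, 2).
  rewrite -cards_draws; apply: subset_leq_card; apply/subsetP => s.
  rewrite !inE => /andP[/andP[/eqP cs _] /eqP ci].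
  rewrite cs eqxx andbT.
  have : s :&: V1 == s by rewrite eqEcard subsetIl ci cs.
  by move/eqP/setIidPl.
rewrite /slicing_euler hV hE hF.
lia.
Qed.

Lemma euler_compl (V : finType) (M : {set {set V}}) (V1 : {set V}) :
  slicing_euler M (~: V1) = slicing_euler M V1.
Proof.
have hm : forall s, mixed (~: V1) s = mixed V1 s.
  move=> s; have e1 : s :&: ~: V1 = s :\: V1 by rewrite setDE.
  have e2 : s :\: ~: V1 = s :&: V1 by rewrite setDE setCK.
  by rewrite /mixed e1 e2 andbC.
have E : forall X : {set {set V}}, [set e in X | mixed (~: V1) e] = [set e in X | mixed V1 e].
  by move=> X; apply/setP => e; rewrite !inE hm.
by rewrite /slicing_euler /sl_vertices /sl_edges /sl_faces !E.
Qed.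

Lemma genus_le (V : finType) (M : {set {set V}}) (W1 : {set V}) (c : nat) :
  (2%:Z - 2 * (Posz c) <= slicing_euler M W1)%R -> (slicing_genus M W1 <= c%:R)%R.
Proof.
move=> H; rewrite /slicing_genus ler_pdivrMr //.
have H' : ((2%:Z - 2 * (Posz c))%:~R <= (slicing_euler M W1)%:~R :> rat)%R by rewrite ler_int.
move: H'; rewrite rmorphB rmorphM /=.
have -> : ((Posz c)%:~R : rat)%R = (c%:R)%R by [].
have -> : ((2%Z)%:~R : rat)%R = 2%R by [].
set y := ((slicing_euler M W1)%:~R : rat)%R.
move=> h; lra.
Qed.

Lemma bound_from (V : finType) (M : {set {set V}}) (W1 : {set V}) (n : nat) :
  comb_3manifold M -> vertices M = [set: V] ->
  0 < #|W1| -> #|W1| <= n ->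
  (slicing_genus M W1 <= ('C(n.-1, 2))%:R)%R.
Proof.
move=> HM HV k1 kn; apply: genus_le.
have hb := chi_bound W1 HM HV.
have hmono : 'C(#|W1|.-1, 2) <= 'C(n.-1, 2) by apply: leq_bin2l; lia.
have hS : 'C(#|W1|, 2) = 'C(#|W1|.-1, 2) + #|W1|.-1.
  by case: #|W1| k1 => // k _; rewrite binS bin1.
lia.
Qed.

Theorem proposition2p2 (V : finType) (M : {set {set V}}) (V1 : {set V}) (n : nat) :
  comb_3manifold M ->
  vertices M = [set: V] ->
  orientable M ->
  complex_connected M ->
  V1 != set0 -> V1 != [set: V] ->
  (#|V| = n.*2 \/ #|V| = n.*2.+1) ->
  slicing_connected M V1 ->
  (slicing_genus M V1 <= ('C(n.-1, 2))%:R)%R.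
Proof.
move=> HM HV _ _ n0 nT hc _.
have k1 : 0 < #|V1| by rewrite card_gt0.
have kV : #|V1| < #|V| by rewrite -cardsT; apply: proper_card; rewrite properT.
case: (leqP #|V1| n) => kn; first exact: bound_from.
rewrite /slicing_genus -euler_compl.
have := @bound_from V M (~: V1) n HM HV.
rewrite /slicing_genus; apply; rewrite cardsCs setCK; lia.
Qed.
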